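(* For arbitrary natural numbers $k,\ell\geq 2$ there exist a finite alphabet $A$, a letter $a\in A$, and languages $K,L\subseteq A^*$ whose minimal complete deterministic finite automata have $k$ and $\ell$ states, respectively, such that every complete deterministic finite automaton recognizing the language $KaL=\{\,uav\mid u\in K,\ v\in L\,\}$ has at least $k2^\ell$ states. *)

(* Defs.v *)
From mathcomp Require Import all_boot.
Set Implicit Arguments. Unset Strict Implicit. Unset Printing Implicit Defensive.

Record dfa (A : finType) := DFA {
  dfa_state : finType;
  dfa_init : dfa_state;
  dfa_trans : dfa_state -> A -> dfa_state;
  dfa_accept : pred dfa_state }.

Definition lang (A : finType) := seq A -> Prop.

Definition dfa_accepts (A : finType) (M : dfa A) (w : seq A) : bool :=
  @dfa_accept A M (foldl (@dfa_trans A M) (@dfa_init A M) w).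

Definition recognizes (A : finType) (M : dfa A) (L : lang A) : Prop :=
  forall w, dfa_accepts M w <-> L w.

Definition minimal_dfa_size (A : finType) (L : lang A) (n : nat) : Prop :=
  (exists M : dfa A, recognizes M L /\ #|dfa_state M| = n) /\
  (forall M : dfa A, recognizes M L -> n <= #|dfa_state M|).

Definition concat_letter (A : finType) (K : lang A) (a : A) (L : lang A) : lang A :=
  fun w => exists u v, w = u ++ a :: v /\ K u /\ L v.

(* Main.v *)
Require Import Defs.
From mathcomp Require Import all_boot.

Set Implicit Arguments. Unset Strict Implicit. Unset Printing Implicit Defensive.

Lemma dist_bound (A : finType) (X : lang A) (M : dfa A) (I : finType)
  (w : I -> seq A) : recognizes M X ->
  (forall i j, i != j -> exists z, ~ (X (w i ++ z) <-> X (w j ++ z))) ->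
  #|I| <= #|dfa_state M|.
Proof.
move=> HM Hd.
pose f i := foldl (@dfa_trans A M) (@dfa_init A M) (w i).
have inj : injective f.
  move=> i j Hf; case: (eqVneq i j) => // ne.
  have [z Hz] := Hd i j ne; exfalso; apply: Hz.
  split=> h; apply/HM; move/HM: h; rewrite /dfa_accepts !foldl_cat;
  by rewrite /f in Hf; rewrite Hf.
exact: (leq_card _ inj).
Qed.

Lemma rcons_split (T : Type) (w u v : seq T) x b : rcons w x = u ++ b :: v ->
  (v = [::] /\ u = w /\ b = x) \/ (exists v', v = rcons v' x /\ w = u ++ b :: v').
Proof.
case/lastP: v => [|v' y].
  by rewrite cats1 => /rcons_inj [-> ->]; left.
rewrite -rcons_cons -rcons_cat => /rcons_inj [-> ->]; right; exists v'; done.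
Qed.

Unset Implicit Arguments.
Notation Alph k l := (option ({ffun 'I_k.+2 -> 'I_k.+2} * {ffun 'I_l.+2 -> 'I_l.+2})%type).

Definition dK k l (p : 'I_k.+2) (x : Alph k l) : 'I_k.+2 :=
  if x is Some (f, _) then f p else p.
Definition dL k l (q : 'I_l.+2) (x : Alph k l) : 'I_l.+2 :=
  if x is Some (_, g) then g q else q.

Definition DK k l : dfa (Alph k l) := @DFA _ 'I_k.+2 ord0 (@dK k l) (fun x => x == ord0).
Definition DL k l : dfa (Alph k l) := @DFA _ 'I_l.+2 ord0 (@dL k l) (fun x => x == ord0).
Definition KL k l : lang (Alph k l) := fun w => dfa_accepts (DK k l) w.
Definition LL k l : lang (Alph k l) := fun w => dfa_accepts (DL k l) w.

Definition step k l (c : 'I_k.+2 * {set 'I_l.+2}) (x : Alph k l) :=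
  match x with
  | None => (c.1, if c.1 == ord0 then ord0 |: c.2 else c.2)
  | Some (f, g) => (f c.1, g @: c.2)
  end.

Lemma run_char k l (w : seq (Alph k l)) :
  (foldl (@step k l) (ord0, set0) w).1 = foldl (@dK k l) ord0 w /\
  forall s, s \in (foldl (@step k l) (ord0, set0) w).2 <->
    exists u v, w = u ++ None :: v /\ foldl (@dK k l) ord0 u = ord0 /\
      foldl (@dL k l) ord0 v = s.
Proof.
elim/last_ind: w => [|w x [IH1 IH2]].
  split => //= s; rewrite in_set0; split => // [[u [v [H _]]]].
  by case: u H.
rewrite !foldl_rcons.
move: IH1 IH2; case: (foldl (@step k l) (ord0, set0) w) => p S /= IH1 IH2.
case: x => [[f g]|] /=.
  split; first by rewrite IH1.
  move=> s; split.
    case/imsetP => s' Hs' ->.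
    have [u [v [Hw [Hu Hv]]]] := (IH2 s').1 Hs'.
    exists u, (rcons v (Some (f, g))).
    by rewrite Hw rcons_cat rcons_cons foldl_rcons Hv.
  move=> [u [v [Hw [Hu Hv]]]].
  case: (rcons_split Hw) => [[_ [_ //]] | [v' [Hv' Hw']]].
  subst v; apply/imsetP; exists (foldl (@dL k l) ord0 v').
    by apply/IH2; exists u, v'.
  by rewrite -Hv foldl_rcons.
split; first by rewrite IH1.
move=> s; split.
  have H1 : s \in S -> exists u v, rcons w None = u ++ None :: v /\
     foldl (@dK k l) ord0 u = ord0 /\ foldl (@dL k l) ord0 v = s.
    move=> Hs; have [u [v [Hw [Hu Hv]]]] := (IH2 s).1 Hs.
    exists u, (rcons v None).
    by rewrite Hw rcons_cat rcons_cons foldl_rcons Hv.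
  case E: (p == ord0); last exact: H1.
  rewrite !inE; case/orP => [/eqP -> | /H1 //].
  exists w, [::]; rewrite cats1; split => //; split => //.
  by rewrite -IH1; apply/eqP.
move=> [u [v [Hw [Hu Hv]]]].
case: (rcons_split Hw) => [[Hv0 [Hu0 _]] | [v' [Hv' Hw']]].
  subst v u; rewrite IH1 Hu eqxx !inE; apply/orP; left; by rewrite -Hv.
subst v; have Hs : s \in S.
  apply/IH2; exists u, v'; split => //; split => //.
  by rewrite -Hv foldl_rcons.
by case: (p == ord0); rewrite ?inE Hs ?orbT.
Qed.

Lemma concat_char k l (w : seq (Alph k l)) :
  concat_letter (KL k l) None (LL k l) w <->
  ord0 \in (foldl (@step k l) (ord0, set0) w).2.
Proof.
split.
  move=> [u [v [Hw [Hu Hv]]]]; apply/(run_char _ _ w).2; exists u, v.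
  by split => //; split; apply/eqP.
move/(run_char _ _ w).2 => [u [v [Hw [Hu Hv]]]]; exists u, v.
by rewrite /KL /LL /dfa_accepts /= Hu Hv eqxx.
Qed.

Definition idf n : {ffun 'I_n -> 'I_n} := [ffun x => x].
Definition gins n (j : 'I_n.+2) : {ffun 'I_n.+2 -> 'I_n.+2} :=
  [ffun x => if x == ord0 then j else x].
Definition test n (j : 'I_n.+2) : {ffun 'I_n.+2 -> 'I_n.+2} :=
  [ffun x => if x == j then ord0 else ord_max].

Fixpoint build k l (s : seq 'I_l.+2) : seq (Alph k l) :=
  if s is j :: s' then None :: Some (idf k.+2, gins l j) :: @build k l s' else [::].

Lemma ord_max_neq0 n : ((ord_max : 'I_n.+2) == ord0) = false.
Proof. by []. Qed.

Lemma build_run k l (s : seq 'I_l.+2) (T : {set 'I_l.+2}) :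
  ord0 \notin T -> all (fun j => j != ord0) s ->
  foldl (@step k l) (ord0, T) (@build k l s) = (ord0, T :|: [set x in s]).
Proof.
elim: s T => [|j s IH] T HT /=.
  move=> _; congr pair; apply/setP => x; by rewrite !inE orbF.
case/andP => Hj Hs.
have -> : [set gins l j x | x in ord0 |: T] = j |: T.
  rewrite imsetU1 /gins ffunE eqxx; congr setU.
  rewrite -[RHS]imset_id; apply: eq_in_imset => x Hx; rewrite ffunE.
  case: eqP => // E; by rewrite -E Hx in HT.
rewrite /= ffunE IH //.
  congr pair; apply/setP => x; rewrite !inE; by case: (x == j); rewrite ?orbT.
by rewrite !inE negb_or eq_sym Hj.
Qed.

Definition wordC k l (c : 'I_k.+2 * {set 'I_l.+2}) : seq (Alph k l) :=
  @build k l (enum (c.2 :\ ord0)) ++ (if ord0 \in c.2 then [:: None] else [::]) ++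
  [:: Some ([ffun _ => c.1], idf l.+2)].

Lemma wordC_run k l c : foldl (@step k l) (ord0, set0) (wordC k l c) = c.
Proof.
case: c => p S; rewrite /wordC !foldl_cat build_run ?inE //; last first.
  by apply/allP => x; rewrite mem_enum !inE => /andP [].
have -> : set0 :|: [set x in enum (S :\ ord0)] = S :\ ord0.
  by apply/setP => x; rewrite !inE mem_enum !inE.
have idS : forall T : {set 'I_l.+2}, [set idf l.+2 x | x in T] = T.
  by move=> T; rewrite -[RHS]imset_id; apply: eq_imset => x; rewrite ffunE.
rewrite /=; case E: (ord0 \in S) => /=; rewrite ffunE idS; congr pair.
  by rewrite setD1K.
by apply/setP => x; rewrite !inE; case: eqP => // ->; rewrite E.
Qed.

Lemma test_in n (s : 'I_n.+2) (S : {set 'I_n.+2}) :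
  (ord0 \in [set test n s x | x in S]) = (s \in S).
Proof.
apply/imsetP/idP => [[x Hx]|Hs]; last by exists s; rewrite // ffunE eqxx.
rewrite ffunE; case: eqP => [<- //| _] /eqP; by rewrite eq_sym ord_max_neq0.
Qed.

Lemma cst_notin n (S : {set 'I_n.+2}) :
  (ord0 \in [set [ffun _ => (ord_max : 'I_n.+2)] x | x in S]) = false.
Proof.
apply/imsetP => [[x _]]; rewrite ffunE => /eqP; by rewrite eq_sym ord_max_neq0.
Qed.

Lemma dist_cfg k l (c c' : 'I_k.+2 * {set 'I_l.+2}) : c != c' ->
  exists z, (ord0 \in (foldl (@step k l) c z).2) != (ord0 \in (foldl (@step k l) c' z).2).
Proof.
case: c c' => p S [p' S'] ne.
case: (eqVneq S S') => [eqS | neS].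
  subst S'; have nep : p != p' by apply: contraNneq ne => ->.
  exists [:: Some (test k p, [ffun _ => ord_max]); None] => /=.
  have nep2 : (p' == p) = false by rewrite eq_sym (negbTE nep).
  rewrite /test !ffunE eqxx nep2 ord_max_neq0 !inE eqxx /=.
  by rewrite cst_notin.
have : ~~ [forall s, (s \in S) == (s \in S')].
  apply: contra neS => /forallP H; apply/eqP/setP => s; apply/eqP/H.
rewrite negb_forall => /existsP [s Hs].
by exists [:: Some (idf k.+2, test l s)]; rewrite /= !test_in.
Qed.

Lemma minK k l : minimal_dfa_size (KL k l) k.+2.
Proof.
split.
  by exists (DK k l); split; [move=> w | rewrite card_ord].
move=> M HM.
have := dist_bound (w := fun q : 'I_k.+2 => [:: Some ([ffun _ => q], idf l.+2)]) HM.
rewrite card_ord; apply => q q' ne.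
exists [:: Some (test k q, idf l.+2)].
rewrite /KL /dfa_accepts /= /dK !ffunE eqxx ifN_eqC // ord_max_neq0 /=.
by move=> [H _]; have := H (eqxx _).
Qed.

Lemma minL k l : minimal_dfa_size (LL k l) l.+2.
Proof.
split.
  by exists (DL k l); split; [move=> w | rewrite card_ord].
move=> M HM.
have := dist_bound (w := fun q : 'I_l.+2 => [:: Some (idf k.+2, [ffun _ => q])]) HM.
rewrite card_ord; apply => q q' ne.
exists [:: Some (idf k.+2, test l q)].
rewrite /LL /dfa_accepts /= /dL !ffunE eqxx ifN_eqC // ord_max_neq0 /=.
by move=> [H _]; have := H (eqxx _).
Qed.

Theorem proposition2 (k l : nat) (hk : 2 <= k) (hl : 2 <= l) :
  exists (A : finType) (a : A) (K L : lang A),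
    minimal_dfa_size K k /\ minimal_dfa_size L l /\
    forall M : dfa A, recognizes M (concat_letter K a L) ->
      k * 2 ^ l <= #|dfa_state M|.
Proof.
case: k hk => [|[|k]] // _; case: l hl => [|[|l]] // _.
exists (Alph k l), None, (KL k l), (LL k l).
split; first exact: minK.
split; first exact: minL.
move=> M HM.
have := dist_bound (w := wordC k l) HM.
have -> : #|{: 'I_k.+2 * {set 'I_l.+2}}| = k.+2 * 2 ^ l.+2.
  rewrite card_prod card_ord; congr muln.
  by rewrite -cardsT -powersetT card_powerset cardsT card_ord.
apply => c c' ne.
have [z Hz] := dist_cfg k l c c' ne.
have E : forall d, (ord0 \in (foldl (step k l) d z).2) <->
    concat_letter (KL k l) None (LL k l) (wordC k l d ++ z).
  by move=> d; rewrite -{1}(wordC_run k l d) -foldl_cat; split => /concat_char.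
exists z => H; apply: (negP Hz); apply/eqP; apply/idP/idP => /E /H /E //.
Qed.
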